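(* Suppose the matrix $P$ satisfies simultaneously: (i) for all $n\in\mathbb N$ and all $c\in\{1,2,\dots,m_n\}$, $p_{c,n}\cdot p_{c-1,n}<0$; and (ii) the limits $\lim_{n\to\infty}\prod_{k=1}^{n}\frac{p_{0,k}}{q_{0,k}}$ and $\lim_{n\to\infty}\prod_{k=1}^{n}\frac{p_{m_k,k}}{q_{m_k,k}}$ are both different from $0$. Then $F$ has neither a finite nor an infinite derivative at any nega-$\tilde Q$-rational point of $[0,1]$.
   Context: Let $(m_n)_{n\ge1}$ be finite nonnegative integers and $\tilde Q=\|q_{i,n}\|$ ($i\in\{0,\dots,m_n\}$) with $q_{i,n}>0$, $\sum_{i}q_{i,n}=1$ for all $n$, and $\prod_n q_{i_n,n}=0$ for every digit sequence $(i_n)$. Put $a_{0,n}=0$, $a_{i,n}=\sum_{l<i}q_{l,n}$; $\Delta^{\tilde Q}_{j_1j_2\dots}=a_{j_1,1}+\sum_{n\ge2}a_{j_n,n}\prod_{l<n}q_{j_l,l}$. The nega-$\tilde Q$-representation $x=\Delta^{-\tilde Q}_{i_1i_2\dots}$ means $x=\Delta^{\tilde Q}_{i_1[m_2-i_2]i_3[m_4-i_4]\dots}$; every $x\in[0,1]$ has one. The nega-$\tilde Q$-rational points are the numbers $\Delta^{-\tilde Q}_{i_1\dots i_{n-1}i_nm_{n+1}0m_{n+3}0m_{n+5}\dots}=\Delta^{-\tilde Q}_{i_1\dots i_{n-1}[i_n-1]0m_{n+2}0m_{n+4}\dots}$ with $i_n\ne0$ (they have two representations). Let $P=\|p_{i,n}\|$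 have the same shape with $p_{i,n}\in(-1,1)$, $\sum_ip_{i,n}=1$, $\prod_n|p_{i_n,n}|=0$ for every digit sequence, $0<\sum_{i<c}p_{i,n}<1$ for $c\in\{1,\dots,m_n\}$. Put $\beta_{0,n}=0$, $\beta_{c,n}=\sum_{i<c}p_{i,n}$; for odd $n$: $\tilde p_{i,n}=p_{i,n}$, $\tilde\beta_{i,n}=\beta_{i,n}$; for even $n$: $\tilde p_{i,n}=p_{m_n-i,n}$, $\tilde\beta_{i,n}=\beta_{m_n-i,n}$. $F(x)=\beta_{i_1,1}+\sum_{k\ge2}\tilde\beta_{i_k,k}\prod_{j<k}\tilde p_{i_j,j}$ for $x=\Delta^{-\tilde Q}_{i_1i_2\dots}$ (independent of the representation); $F$ is the unique bounded solution on $[0,1]$ of the system $f(\hat\varphi^k(x))=\tilde\beta_{i_{k+1}(x),k+1}+\tilde p_{i_{k+1}(x),k+1}f(\hat\varphi^{k+1}(x))$, $k\ge0$, where $\hat\varphi$ is the shift of $\tilde Q$-digits. *)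

(* Defs.v *)
From Stdlib Require Import Reals ClassicalEpsilon.
From Coquelicot Require Import Coquelicot.
Open Scope R_scope.

(* Indexing convention: the paper's column n >= 1 is index n-1 >= 0 here.
   m k = m_{k+1},  q i k = q_{i,k+1},  p i k = p_{i,k+1},  d k = i_{k+1}.
   Thus the paper's odd columns are the even indices here. *)

Fixpoint psum (f : nat -> R) (n : nat) : R :=
  match n with O => 0 | S n' => psum f n' + f n' end.
Fixpoint pprod (f : nat -> R) (n : nat) : R :=
  match n with O => 1 | S n' => pprod f n' * f n' end.

Definition valid (m : nat -> nat) (d : nat -> nat) : Prop :=
  forall k, (d k <= m k)%nat.

Definition aQ (q : nat -> nat -> R) (i k : nat) : R := psum (fun l => q l k) i.

Definition DeltaQ (q : nat -> nat -> R) (d : nat -> nat) : R :=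
  Series (fun k => aQ q (d k) k * pprod (fun l => q (d l) l) k).

(* nega-digits: paper even positions (odd indices here) are replaced by m - i *)
Definition negd (m : nat -> nat) (d : nat -> nat) (k : nat) : nat :=
  if Nat.odd k then (m k - d k)%nat else d k.

Definition DeltaNeg (m : nat -> nat) (q : nat -> nat -> R) (d : nat -> nat) : R :=
  DeltaQ q (negd m d).

Definition betaP (p : nat -> nat -> R) (c k : nat) : R := psum (fun i => p i k) c.
Definition tp (m : nat -> nat) (p : nat -> nat -> R) (i k : nat) : R :=
  if Nat.odd k then p (m k - i)%nat k else p i k.
Definition tbeta (m : nat -> nat) (p : nat -> nat -> R) (i k : nat) : R :=
  if Nat.odd k then betaP p (m k - i)%nat k else betaP p i k.

Definition Frep (m : nat -> nat) (p : nat -> nat -> R) (d : nat -> nat) : R :=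
  Series (fun k => tbeta m p (d k) k * pprod (fun l => tp m p (d l) l) k).

(* F(x) := Frep of (some) nega-Q~-representation of x
   (the paper shows the value does not depend on the representation). *)
Definition F (m : nat -> nat) (q p : nat -> nat -> R) (x : R) : R :=
  Frep m p (epsilon (inhabits (fun _ : nat => O))
                    (fun d => valid m d /\ DeltaNeg m q d = x)).

Definition QtildeOK (m : nat -> nat) (q : nat -> nat -> R) : Prop :=
  (forall n i, (i <= m n)%nat -> 0 < q i n) /\
  (forall n, psum (fun i => q i n) (S (m n)) = 1) /\
  (forall d, valid m d -> is_lim_seq (fun N => pprod (fun l => q (d l) l) N) 0).

Definition POK (m : nat -> nat) (p : nat -> nat -> R) : Prop :=
  (forall n i, (i <= m n)%nat -> -1 < p i n < 1) /\
  (forall n, psum (fun i => p i n) (S (m n)) = 1) /\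
  (forall d, valid m d -> is_lim_seq (fun N => pprod (fun l => Rabs (p (d l) l)) N) 0) /\
  (forall n c, (1 <= c <= m n)%nat -> 0 < betaP p c n < 1).

Definition NegaRational (m : nat -> nat) (q : nat -> nat -> R) (x : R) : Prop :=
  exists (d : nat -> nat) (N : nat),
    valid m d /\ d N <> O /\
    (forall k, (N < k)%nat -> d k = if Nat.odd (k - N) then m k else O) /\
    x = DeltaNeg m q d.

(* Main.v *)
Require Import Defs.
From Stdlib Require Import Reals Lra Lia ClassicalEpsilon FunctionalExtensionality Classical.
From Coquelicot Require Import Coquelicot.
Open Scope R_scope.

Definition Pw (w : nat -> nat -> R) (j : nat -> nat) (n : nat) : R :=
  pprod (fun l => w (j l) l) n.
Definition Sw (w : nat -> nat -> R) (j : nat -> nat) (n : nat) : R :=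
  psum (fun k => betaP w (j k) k * Pw w j k) n.
Definition Vw (w : nat -> nat -> R) (j : nat -> nat) : R :=
  Series (fun k => betaP w (j k) k * Pw w j k).

Lemma psum_sum_n (a : nat -> R) n : sum_n a n = psum a (S n).
Proof.
  induction n.
  - rewrite sum_O. simpl. ring.
  - rewrite sum_Sn, IHn. simpl. unfold plus; simpl. ring.
Qed.

Lemma Series_of_lim (a : nat -> R) (l : R) :
  is_lim_seq (fun n => psum a n) l -> Series a = l.
Proof.
  intros H. apply is_series_unique.
  apply (is_lim_seq_incr_1 _ l) in H.
  assert (H2 : is_lim_seq (sum_n a) l).
  { eapply is_lim_seq_ext; [|exact H]. intros n; simpl. now rewrite psum_sum_n. }
  exact H2.
Qed.

Lemma Vw_lim w j (l : R) : is_lim_seq (Sw w j) l -> Vw w j = l.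
Proof. intros H. apply Series_of_lim. exact H. Qed.

Lemma prefix_eq w u u' n : (forall k, (k < n)%nat -> u k = u' k) ->
  forall k, (k <= n)%nat -> Sw w u k = Sw w u' k /\ Pw w u k = Pw w u' k.
Proof.
  intros H k. induction k; intros Hk.
  - split; reflexivity.
  - destruct IHk as [H1 H2]; [lia|].
    unfold Sw, Pw in *; simpl. rewrite H1, H2, (H k) by lia. split; reflexivity.
Qed.

Lemma tail_m_stable w m u n : (forall k, betaP w (S (m k)) k = 1) ->
  (forall k, (n <= k)%nat -> u k = m k) ->
  forall i, Sw w u (n + i) + Pw w u (n + i) = Sw w u n + Pw w u n.
Proof.
  intros Hc Ht i. induction i.
  - rewrite Nat.add_0_r. reflexivity.
  - rewrite Nat.add_succ_r. unfold Sw, Pw in *. simpl.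
    rewrite Ht by lia. rewrite <- IHi.
    pose proof (Hc (n+i)%nat) as E. simpl in E. unfold betaP in *. rewrite <- (Ht (n+i)%nat) in * by lia.
    simpl in E. nra.
Qed.

Lemma tail_m w m u n : (forall k, betaP w (S (m k)) k = 1) ->
  (forall k, (n <= k)%nat -> u k = m k) -> is_lim_seq (Pw w u) 0 ->
  Vw w u = Sw w u n + Pw w u n.
Proof.
  intros Hc Ht HP. apply Vw_lim.
  apply (is_lim_seq_incr_n _ n).
  apply (is_lim_seq_incr_n _ n) in HP.
  eapply is_lim_seq_ext with (u := fun i => (Sw w u n + Pw w u n) - Pw w u (i + n)%nat).
  { intros i. rewrite Nat.add_comm. rewrite <- (tail_m_stable w m u n Hc Ht i). ring. }
  replace (Finite (Sw w u n + Pw w u n)) with (Rbar_minus (Sw w u n + Pw w u n) 0).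
  2:{ simpl. f_equal. ring. }
  apply is_lim_seq_minus'. apply is_lim_seq_const. exact HP.
Qed.

Lemma tail_0_stable w u n : (forall k, (n <= k)%nat -> u k = O) ->
  forall i, Sw w u (n + i) = Sw w u n.
Proof.
  intros Ht i. induction i.
  - rewrite Nat.add_0_r. reflexivity.
  - rewrite Nat.add_succ_r. unfold Sw in *. simpl.
    rewrite Ht by lia. rewrite IHi. change (betaP w 0 (n+i)) with 0. ring.
Qed.

Lemma tail_0 w u n : (forall k, (n <= k)%nat -> u k = O) -> Vw w u = Sw w u n.
Proof.
  intros Ht. apply Vw_lim.
  apply (is_lim_seq_incr_n _ n).
  eapply is_lim_seq_ext with (u := fun i => Sw w u n).
  { intros i. rewrite Nat.add_comm. now rewrite tail_0_stable. }
  apply is_lim_seq_const.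
Qed.


Lemma beta_lt (m : nat -> nat) (w : nat -> nat -> R) (Hpos : forall n i, (i <= m n)%nat -> 0 < w i n) k c c' : (c < c')%nat -> (c' <= S (m k))%nat -> betaP w c k < betaP w c' k.
Proof.
  intros H1 H2. induction c'. lia.
  change (betaP w (S c') k) with (betaP w c' k + w c' k).
  pose proof (Hpos k c' ltac:(lia)).
  destruct (Nat.eq_dec c c'). subst. lra.
  assert (betaP w c k < betaP w c' k) by (apply IHc'; lia). lra.
Qed.

Lemma beta_le (m : nat -> nat) (w : nat -> nat -> R) (Hpos : forall n i, (i <= m n)%nat -> 0 < w i n) k c c' : (c <= c')%nat -> (c' <= S (m k))%nat -> betaP w c k <= betaP w c' k.
Proof.
  intros H1 H2. destruct (Nat.eq_dec c c'). subst; lra.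
  left. apply (beta_lt m w Hpos); lia.
Qed.

Lemma beta_01 (m : nat -> nat) (w : nat -> nat -> R) (Hpos : forall n i, (i <= m n)%nat -> 0 < w i n) (Hc : forall k, betaP w (S (m k)) k = 1) k c : (c <= S (m k))%nat -> 0 <= betaP w c k <= 1.
Proof.
  intros H. split.
  - change 0 with (betaP w 0 k). apply (beta_le m w Hpos); lia.
  - rewrite <- (Hc k). apply (beta_le m w Hpos); lia.
Qed.

Lemma Pw_pos (m : nat -> nat) (w : nat -> nat -> R) (Hpos : forall n i, (i <= m n)%nat -> 0 < w i n) u n : valid m u -> 0 < Pw w u n.
Proof.
  intros Hv. induction n. simpl. unfold Pw; simpl; lra.
  unfold Pw in *; simpl. apply Rmult_lt_0_compat; auto.
Qed.

Lemma S_step (m : nat -> nat) (w : nat -> nat -> R) (Hpos : forall n i, (i <= m n)%nat -> 0 < w i n) (Hc : forall k, betaP w (S (m k)) k = 1) u n : valid m u -> Sw w u n <= Sw w u (S n) /\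
   Sw w u (S n) + Pw w u (S n) <= Sw w u n + Pw w u n.
Proof.
  intros Hv. pose proof (Pw_pos m w Hpos u n Hv).
  pose proof (beta_01 m w Hpos Hc n (u n) ltac:(specialize (Hv n); lia)).
  pose proof (beta_01 m w Hpos Hc n (S (u n)) ltac:(specialize (Hv n); lia)).
  change (betaP w (S (u n)) n) with (betaP w (u n) n + w (u n) n) in H1.
  unfold Sw, Pw in *; simpl. split; nra.
Qed.

Lemma S_chain (m : nat -> nat) (w : nat -> nat -> R) (Hpos : forall n i, (i <= m n)%nat -> 0 < w i n) (Hc : forall k, betaP w (S (m k)) k = 1) u n i : valid m u -> Sw w u n <= Sw w u (n + i) /\
   Sw w u (n + i) + Pw w u (n + i) <= Sw w u n + Pw w u n.
Proof.
  intros Hv. induction i. rewrite Nat.add_0_r. lra.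
  rewrite Nat.add_succ_r. pose proof (S_step m w Hpos Hc u (n+i) Hv). lra.
Qed.

Lemma V_bounds (m : nat -> nat) (w : nat -> nat -> R) (Hpos : forall n i, (i <= m n)%nat -> 0 < w i n) (Hc : forall k, betaP w (S (m k)) k = 1) u n : valid m u -> Sw w u n <= Vw w u <= Sw w u n + Pw w u n.
Proof.
  intros Hv.
  assert (Hcv : ex_finite_lim_seq (Sw w u)).
  { apply (ex_finite_lim_seq_incr _ 1).
    - intros k. apply (S_step m w Hpos Hc u k Hv).
    - intros k. pose proof (S_chain m w Hpos Hc u 0 k Hv). pose proof (Pw_pos m w Hpos u k Hv).
      assert (Sw w u 0 = 0) by reflexivity. assert (Pw w u 0 = 1) by reflexivity.
      simpl in H. lra. }
  destruct Hcv as [l Hl].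
  rewrite (Vw_lim w u l Hl).
  apply (is_lim_seq_incr_n _ n) in Hl.
  split.
  - assert (Rbar_le (Sw w u n) l).
    { eapply is_lim_seq_le with (u := fun _ => Sw w u n); [|apply is_lim_seq_const|exact Hl].
      intros k; simpl. rewrite Nat.add_comm. apply (S_chain m w Hpos Hc u n k Hv). }
    exact H.
  - assert (Rbar_le l (Sw w u n + Pw w u n)).
    { eapply is_lim_seq_le with (v := fun _ => Sw w u n + Pw w u n); [|exact Hl|apply is_lim_seq_const].
      intros k; simpl. rewrite Nat.add_comm. pose proof (S_chain m w Hpos Hc u n k Hv).
      pose proof (Pw_pos m w Hpos u (n+k) Hv). lra. }
    exact H.
Qed.

Lemma Rabs_pprod f n : Rabs (pprod f n) = pprod (fun l => Rabs (f l)) n.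
Proof. induction n; simpl. apply Rabs_R1. rewrite Rabs_mult, IHn. reflexivity. Qed.


Lemma q_pos (m : nat -> nat) (q : nat -> nat -> R) (HQ : QtildeOK m q) : forall n i, (i <= m n)%nat -> 0 < q i n.
Proof. apply HQ. Qed.
Lemma q_col (m : nat -> nat) (q : nat -> nat -> R) (HQ : QtildeOK m q) : forall k, betaP q (S (m k)) k = 1.
Proof. apply HQ. Qed.
Lemma p_col (m : nat -> nat) (p : nat -> nat -> R) (HP : POK m p) : forall k, betaP p (S (m k)) k = 1.
Proof. apply HP. Qed.

Lemma Pw_p_lim (m : nat -> nat) (p : nat -> nat -> R) (HP : POK m p) u : valid m u -> is_lim_seq (Pw p u) 0.
Proof.
  intros Hv. apply is_lim_seq_abs_0.
  eapply is_lim_seq_ext; [|apply (proj1 (proj2 (proj2 HP)) u Hv)].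
  intros n. unfold Pw. now rewrite Rabs_pprod.
Qed.

Lemma Pw_q_lim (m : nat -> nat) (q : nat -> nat -> R) (HQ : QtildeOK m q) u : valid m u -> is_lim_seq (Pw q u) 0.
Proof. intros Hv. apply (proj2 (proj2 HQ) u Hv). Qed.

Lemma core (m : nat -> nat) (q p : nat -> nat -> R) (HQ : QtildeOK m q) (HP : POK m p) j j' n : valid m j -> valid m j' ->
  (forall k, (k < n)%nat -> j k = j' k) -> (j n < j' n)%nat ->
  Vw q j = Vw q j' -> Vw p j = Vw p j'.
Proof.
  intros Hv Hv' Hpre Hlt HV.
  pose proof (prefix_eq q j j' n Hpre n (le_n n)) as [Es Ep].
  pose proof (prefix_eq p j j' n Hpre n (le_n n)) as [Esp Epp].
  pose proof (Pw_pos m q (q_pos m q HQ) j n Hv) as HPpos.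
  assert (A1 : Sw q j (S n) + Pw q j (S n) = Sw q j n + betaP q (S (j n)) n * Pw q j n).
  { unfold Sw, Pw; simpl. change (betaP q (S (j n)) n) with (betaP q (j n) n + q (j n) n). ring. }
  assert (A2 : Sw q j' (S n) = Sw q j n + betaP q (j' n) n * Pw q j n).
  { unfold Sw at 1. simpl. fold (Sw q j' n). rewrite <- Es, <- Ep. reflexivity. }
  pose proof (V_bounds m q (q_pos m q HQ) (q_col m q HQ) j (S n) Hv) as B1.
  pose proof (V_bounds m q (q_pos m q HQ) (q_col m q HQ) j' (S n) Hv') as B2.
  assert (Hb : betaP q (S (j n)) n <= betaP q (j' n) n).
  { apply (beta_le m q (q_pos m q HQ)); specialize (Hv' n); lia. }
  assert (E1 : Vw q j = Sw q j (S n) + Pw q j (S n)) by nra.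
  assert (E3 : Vw q j' = Sw q j' (S n)) by nra.
  assert (E2 : j' n = S (j n)).
  { destruct (Nat.eq_dec (j' n) (S (j n))) as [e|ne]; auto.
    assert (betaP q (S (j n)) n < betaP q (j' n) n).
    { apply (beta_lt m q (q_pos m q HQ)); specialize (Hv' n); lia. }
    exfalso. nra. }
  assert (Hm : forall r, (S n <= r)%nat -> j r = m r).
  { intros r Hr. destruct (Nat.eq_dec (j r) (m r)) as [e|ne]; auto. exfalso.
    pose proof (V_bounds m q (q_pos m q HQ) (q_col m q HQ) j (S r) Hv) as B3.
    assert (betaP q (S (j r)) r < betaP q (S (m r)) r).
    { apply (beta_lt m q (q_pos m q HQ)); specialize (Hv r); lia. }
    rewrite (q_col m q HQ) in H.
    pose proof (Pw_pos m q (q_pos m q HQ) j r Hv).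
    assert (Sw q j (S r) + Pw q j (S r) = Sw q j r + betaP q (S (j r)) r * Pw q j r).
    { unfold Sw, Pw; simpl. change (betaP q (S (j r)) r) with (betaP q (j r) r + q (j r) r). ring. }
    pose proof (S_chain m q (q_pos m q HQ) (q_col m q HQ) j (S n) (r - S n) Hv).
    replace (S n + (r - S n))%nat with r in H2 by lia. nra. }
  assert (H0 : forall r, (S n <= r)%nat -> j' r = O).
  { intros r Hr. destruct (Nat.eq_dec (j' r) O) as [e|ne]; auto. exfalso.
    pose proof (V_bounds m q (q_pos m q HQ) (q_col m q HQ) j' (S r) Hv') as B3.
    assert (betaP q 0 r < betaP q (j' r) r).
    { apply (beta_lt m q (q_pos m q HQ)); specialize (Hv' r); lia. }
    change (betaP q 0 r) with 0 in H.
    pose proof (Pw_pos m q (q_pos m q HQ) j' r Hv').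
    assert (Sw q j' (S r) = Sw q j' r + betaP q (j' r) r * Pw q j' r) by reflexivity.
    pose proof (S_chain m q (q_pos m q HQ) (q_col m q HQ) j' (S n) (r - S n) Hv').
    replace (S n + (r - S n))%nat with r in H2 by lia. nra. }
  rewrite (tail_m p m j (S n) (p_col m p HP) Hm (Pw_p_lim m p HP j Hv)).
  rewrite (tail_0 p j' (S n) H0).
  assert (C1 : Sw p j (S n) = Sw p j n + betaP p (j n) n * Pw p j n) by reflexivity.
  assert (C2 : Pw p j (S n) = Pw p j n * p (j n) n) by reflexivity.
  assert (C3 : Sw p j' (S n) = Sw p j' n + betaP p (j' n) n * Pw p j' n) by reflexivity.
  rewrite C1, C2, C3, <- Esp, <- Epp, E2.
  change (betaP p (S (j n)) n) with (betaP p (j n) n + p (j n) n). ring.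
Qed.

Lemma min_diff (j j' : nat -> nat) : (exists k, j k <> j' k) ->
  exists n, j n <> j' n /\ forall k, (k < n)%nat -> j k = j' k.
Proof.
  intros [k Hk]. apply NNPP; intros Hno.
  assert (forall n, forall k, (k <= n)%nat -> j k = j' k).
  { intros n. induction n; intros k0 Hk0.
    - destruct (Nat.eq_dec (j k0) (j' k0)); auto. exfalso; apply Hno. exists k0.
      split; auto. intros; lia.
    - destruct (Nat.eq_dec k0 (S n)); [|apply IHn; lia]. subst.
      destruct (Nat.eq_dec (j (S n)) (j' (S n))); auto. exfalso; apply Hno. exists (S n).
      split; auto. intros; apply IHn; lia. }
  apply Hk. apply (H k). lia.
Qed.

Lemma WD m q p j j' : QtildeOK m q -> POK m p -> valid m j -> valid m j' ->
  Vw q j = Vw q j' -> Vw p j = Vw p j'.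
Proof.
  intros HQ HP Hv Hv' HV.
  destruct (classic (forall k, j k = j' k)) as [Hall|Hn].
  - assert (j = j') by (apply functional_extensionality; auto). subst; reflexivity.
  - apply not_all_ex_not in Hn. destruct (min_diff j j' Hn) as [n [Hne Hpre]].
    destruct (Nat.lt_total (j n) (j' n)) as [Hl|[He|Hl]].
    + apply (core m q p HQ HP j j' n); auto.
    + contradiction.
    + symmetry. apply (core m q p HQ HP j' j n); auto. intros k Hk; symmetry; auto.
Qed.

Lemma negd_valid m d : valid m d -> valid m (negd m d).
Proof. intros Hv k. unfold negd. destruct (Nat.odd k); [lia| apply Hv]. Qed.

Lemma negd_inv m d : valid m d -> negd m (negd m d) = d.
Proof.
  intros Hv. apply functional_extensionality. intros k. unfold negd.
  destruct (Nat.odd k); auto. specialize (Hv k). lia.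
Qed.

Lemma pprod_ext f g n : (forall l, f l = g l) -> pprod f n = pprod g n.
Proof. intros H. induction n; simpl; auto. rewrite IHn, H. reflexivity. Qed.

Lemma Frep_Vw m p d : Frep m p d = Vw p (negd m d).
Proof.
  unfold Frep, Vw. apply Series_ext. intros k. f_equal.
  - unfold tbeta, negd. destruct (Nat.odd k); reflexivity.
  - unfold Pw. apply pprod_ext. intros l. unfold tp, negd. destruct (Nat.odd l); reflexivity.
Qed.

Lemma DeltaNeg_Vw m q d : DeltaNeg m q d = Vw q (negd m d).
Proof. reflexivity. Qed.

Lemma F_eq m q p j : QtildeOK m q -> POK m p -> valid m j ->
  F m q p (Vw q j) = Vw p j.
Proof.
  intros HQ HP Hv. unfold F.
  set (P := fun d => valid m d /\ DeltaNeg m q d = Vw q j).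
  assert (Hex : exists d, P d).
  { exists (negd m j). split. apply negd_valid, Hv.
    rewrite DeltaNeg_Vw, negd_inv by exact Hv. reflexivity. }
  pose proof (epsilon_spec (inhabits (fun _ : nat => O)) P Hex) as [Hv0 Hd0].
  set (d0 := epsilon _ P) in *.
  rewrite Frep_Vw. apply (WD m q p); auto. apply negd_valid; auto.
Qed.

Definition Tm (m : nat -> nat) (u : nat -> nat) (k : nat) (i : nat) : nat :=
  if Nat.ltb i k then u i else m i.
Definition T0 (u : nat -> nat) (k : nat) (i : nat) : nat :=
  if Nat.ltb i k then u i else O.
Definition U (v : nat -> nat) (N c : nat) (k : nat) : nat :=
  if Nat.ltb k N then v k else if Nat.eqb k N then c else O.
Definition U' (m : nat -> nat) (v : nat -> nat) (N c : nat) (k : nat) : nat :=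
  if Nat.ltb k N then v k else if Nat.eqb k N then (c - 1)%nat else m k.

Lemma V_Tm w m u k : (forall k, betaP w (S (m k)) k = 1) ->
  is_lim_seq (Pw w (Tm m u k)) 0 -> Vw w (Tm m u k) = Sw w u k + Pw w u k.
Proof.
  intros Hc Hl. rewrite (tail_m w m (Tm m u k) k Hc).
  - assert (Hp : forall i, (i < k)%nat -> Tm m u k i = u i).
    { intros i Hi. unfold Tm. now rewrite (proj2 (Nat.ltb_lt i k) Hi). }
    destruct (prefix_eq w (Tm m u k) u k Hp k (le_n k)) as [A B].
    now rewrite A, B.
  - intros i Hi. unfold Tm. now rewrite (proj2 (Nat.ltb_ge i k) Hi).
  - exact Hl.
Qed.

Lemma V_T0 w u k : Vw w (T0 u k) = Sw w u k.
Proof.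
  rewrite (tail_0 w (T0 u k) k).
  - assert (Hp : forall i, (i < k)%nat -> T0 u k i = u i).
    { intros i Hi. unfold T0. now rewrite (proj2 (Nat.ltb_lt i k) Hi). }
    destruct (prefix_eq w (T0 u k) u k Hp k (le_n k)) as [A B]. exact A.
  - intros i Hi. unfold T0. now rewrite (proj2 (Nat.ltb_ge i k) Hi).
Qed.

Lemma Tm_valid m u k : valid m u -> valid m (Tm m u k).
Proof. intros Hv i. unfold Tm. destruct (Nat.ltb i k); auto. Qed.
Lemma T0_valid m u k : valid m u -> valid m (T0 u k).
Proof. intros Hv i. unfold T0. destruct (Nat.ltb i k); auto. lia. Qed.

Lemma U_valid m v N c : valid m v -> (c <= m N)%nat -> valid m (U v N c).
Proof.
  intros Hv Hc i. unfold U. destruct (Nat.ltb i N); auto.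
  destruct (Nat.eqb_spec i N); subst; auto. lia.
Qed.
Lemma U'_valid m v N c : valid m v -> (c <= m N)%nat -> valid m (U' m v N c).
Proof.
  intros Hv Hc i. unfold U'. destruct (Nat.ltb i N); auto.
  destruct (Nat.eqb_spec i N); subst; auto. lia.
Qed.

Lemma U_tail v N c k : (S N <= k)%nat -> U v N c k = O.
Proof. intros H. unfold U. rewrite (proj2 (Nat.ltb_ge k N)) by lia.
  destruct (Nat.eqb_spec k N); lia. Qed.
Lemma U'_tail m v N c k : (S N <= k)%nat -> U' m v N c k = m k.
Proof. intros H. unfold U'. rewrite (proj2 (Nat.ltb_ge k N)) by lia.
  destruct (Nat.eqb_spec k N); lia. Qed.

Lemma U_pre m v N c : (forall k, (k < N)%nat -> U v N c k = v k) /\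
                      (forall k, (k < N)%nat -> U' m v N c k = v k).
Proof. split; intros k Hk; unfold U, U'; now rewrite (proj2 (Nat.ltb_lt k N) Hk). Qed.

Lemma U_N v N c : U v N c N = c.
Proof. unfold U. rewrite Nat.ltb_irrefl, Nat.eqb_refl. reflexivity. Qed.
Lemma U'_N m v N c : U' m v N c N = (c - 1)%nat.
Proof. unfold U'. rewrite Nat.ltb_irrefl, Nat.eqb_refl. reflexivity. Qed.

Lemma U_SN w v N c : Sw w (U v N c) (S N) = Sw w v N + betaP w c N * Pw w v N /\
  Pw w (U v N c) (S N) = Pw w v N * w c N.
Proof.
  destruct (prefix_eq w (U v N c) v N (proj1 (U_pre (fun _ => O) v N c)) N (le_n _)) as [A B].
  assert (E1 : Sw w (U v N c) (S N) = Sw w (U v N c) N + betaP w ((U v N c) N) N * Pw w (U v N c) N) by reflexivity.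
  assert (E2 : Pw w (U v N c) (S N) = Pw w (U v N c) N * w ((U v N c) N) N) by reflexivity.
  rewrite E1, E2.
  rewrite A, B, U_N. split; reflexivity.
Qed.

Lemma U'_SN w m v N c : Sw w (U' m v N c) (S N) = Sw w v N + betaP w (c-1) N * Pw w v N /\
  Pw w (U' m v N c) (S N) = Pw w v N * w (c-1)%nat N.
Proof.
  destruct (prefix_eq w (U' m v N c) v N (proj2 (U_pre m v N c)) N (le_n _)) as [A B].
  assert (E1 : Sw w (U' m v N c) (S N) = Sw w (U' m v N c) N + betaP w ((U' m v N c) N) N * Pw w (U' m v N c) N) by reflexivity.
  assert (E2 : Pw w (U' m v N c) (S N) = Pw w (U' m v N c) N * w ((U' m v N c) N) N) by reflexivity.
  rewrite E1, E2.
  rewrite A, B, U'_N. split; reflexivity.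
Qed.

Lemma VU w v N c : Vw w (U v N c) = Sw w v N + betaP w c N * Pw w v N.
Proof.
  rewrite (tail_0 w _ (S N)). apply U_SN. intros k Hk. now apply U_tail.
Qed.

Lemma VU' w m v N c : (forall k, betaP w (S (m k)) k = 1) ->
  is_lim_seq (Pw w (U' m v N c)) 0 -> (1 <= c)%nat ->
  Vw w (U' m v N c) = Sw w v N + betaP w c N * Pw w v N.
Proof.
  intros Hc Hl H1. rewrite (tail_m w m _ (S N) Hc).
  - destruct (U'_SN w m v N c) as [A B]. rewrite A, B.
    assert (Eb : betaP w c N = betaP w (c-1) N + w (c-1)%nat N).
    { destruct c; [lia|]. replace (S c - 1)%nat with c by lia. reflexivity. }
    rewrite Eb; ring.
  - intros k Hk. now apply U'_tail.
  - exact Hl.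
Qed.

Lemma ratio_track (r t g : nat -> R) n0 : (forall k, (n0 <= k)%nat -> r (S k) = r k * g k) ->
  (forall k, t (S k) = t k * g k) -> t n0 <> 0 ->
  forall k, (n0 <= k)%nat -> r k = r n0 / t n0 * t k.
Proof.
  intros Hr Ht Hn k Hk. induction Hk.
  - field. auto.
  - rewrite Hr by lia. rewrite Ht, IHHk. ring.
Qed.

Lemma pprod_pos f n : (forall l, 0 < f l) -> 0 < pprod f n.
Proof. intros H. induction n; simpl. lra. apply Rmult_lt_0_compat; auto. Qed.

Lemma pprod_nz f n : (forall l, (l < n)%nat -> f l <> 0) -> pprod f n <> 0.
Proof. intros H. induction n; simpl. lra. apply Rmult_integral_contrapositive_currified; auto. Qed.

Lemma lim_pos (t : nat -> R) (L : R) : (forall n, 0 < t n) -> L <> 0 -> is_lim_seq t L -> 0 < L.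
Proof.
  intros Ht HL Hl.
  assert (Rbar_le 0 L).
  { apply (is_lim_seq_le (fun _ => 0) t 0 L); auto. intros; left; auto. apply is_lim_seq_const. }
  simpl in H. lra.
Qed.

Lemma tail_j m d N : (forall k, (N < k)%nat -> d k = if Nat.odd (k - N) then m k else O) ->
  forall k, (N < k)%nat -> negd m d k = if Nat.odd N then m k else O.
Proof.
  intros Ht k Hk. unfold negd. rewrite Ht by lia.
  assert (E : Nat.odd k = xorb (Nat.odd N) (Nat.odd (k - N))).
  { replace k with (N + (k - N))%nat at 1 by lia. apply Nat.odd_add. }
  rewrite E. destruct (Nat.odd N), (Nat.odd (k - N)); simpl; lia.
Qed.

Lemma ratio_lim (r t : nat -> R) (g : nat -> R) n0 (L : R) :
  (forall k, (n0 <= k)%nat -> r (S k) = r k * g k) ->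
  (forall k, t (S k) = t k * g k) -> t n0 <> 0 -> is_lim_seq t L ->
  is_lim_seq (fun n => r (n + n0)%nat) (r n0 / t n0 * L).
Proof.
  intros Hr Ht Hn Hl.
  apply (is_lim_seq_incr_n t n0) in Hl.
  apply (is_lim_seq_scal_l _ (r n0 / t n0)) in Hl.
  eapply is_lim_seq_ext; [|exact Hl].
  intros n. simpl. symmetry. apply (ratio_track r t g n0); auto. lia.
Qed.

Theorem mainTheorem11 (m : nat -> nat) (q p : nat -> nat -> R)
  (HQ : QtildeOK m q) (HP : POK m p)
  (Hsign : forall n c, (1 <= c <= m n)%nat -> p c n * p (c - 1)%nat n < 0)
  (H0 : exists l : R, l <> 0 /\
        is_lim_seq (fun n => pprod (fun k => p O k / q O k) n) l)
  (Hm : exists l : R, l <> 0 /\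
        is_lim_seq (fun n => pprod (fun k => p (m k) k / q (m k) k) n) l) :
  forall x, NegaRational m q x ->
    ~ (exists l : Rbar,
         is_lim (fun h => (F m q p (x + h) - F m q p x) / h) 0 l).
Proof.
  intros x [d [N [Hv [HdN [Htail Hx]]]]] [l Hl].
  destruct H0 as [L0 [HL0 HL0l]]. destruct Hm as [Lm [HLm HLml]].
  pose proof (q_pos m q HQ) as Hqpos.
  assert (Hmpos : forall n, (1 <= m n)%nat).
  { intros n. destruct (m n) eqn:E; [|lia]. exfalso.
    destruct HP as [Hb [Hs _]]. specialize (Hs n). rewrite E in Hs. simpl in Hs.
    specialize (Hb n O ltac:(lia)). lra. }
  assert (Hp0 : forall n, 0 < p O n).
  { intros n. destruct HP as [_ [_ [_ Hb]]]. specialize (Hb n 1%nat ltac:(specialize (Hmpos n); lia)).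
    unfold betaP in Hb; simpl in Hb. lra. }
  assert (Hpm : forall n, 0 < p (m n) n).
  { intros n. pose proof (p_col m p HP n) as E.
    destruct HP as [_ [_ [_ Hb]]]. specialize (Hb n (m n) ltac:(specialize (Hmpos n); lia)).
    change (betaP p (S (m n)) n) with (betaP p (m n) n + p (m n) n) in E. lra. }
  assert (Hpnz : forall n i, (i <= m n)%nat -> p i n <> 0).
  { intros n i Hi. destruct i.
    - specialize (Hsign n 1%nat ltac:(specialize (Hmpos n); lia)). simpl in Hsign.
      intros E; rewrite E in Hsign. lra.
    - specialize (Hsign n (S i) ltac:(lia)). intros E; rewrite E in Hsign. lra. }
  set (j := negd m d).
  assert (Hvj : valid m j) by (apply negd_valid; auto).
  assert (Hxj : x = Vw q j) by (rewrite Hx; reflexivity).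
  assert (Hrep : exists v c, valid m v /\ (1 <= c <= m N)%nat /\ x = Vw q (U v N c)).
  { pose proof (tail_j m d N Htail) as Tj. fold j in Tj.
    destruct (Nat.odd N) eqn:HN.
    - exists j, (S (j N)).
      assert (HjN : (j N < m N)%nat).
      { unfold j, negd. rewrite HN. specialize (Hv N). lia. }
      split; [auto|split; [lia|]].
      assert (Ej : j = U' m j N (S (j N))).
      { apply functional_extensionality. intros k. unfold U'.
        destruct (Nat.ltb_spec k N); auto. destruct (Nat.eqb_spec k N). subst; lia.
        apply Tj; lia. }
      rewrite Hxj, Ej at 1. rewrite VU'.
      2:{ apply (q_col m); auto. }
      2:{ apply (Pw_q_lim m); auto. apply U'_valid; auto. }
      2:{ lia. }
      rewrite VU. reflexivity.
    - exists j, (j N).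
      assert (HjN : (j N = d N)).
      { unfold j, negd. rewrite HN. reflexivity. }
      split; [auto|split; [specialize (Hv N); lia|]].
      assert (Ej : j = U j N (j N)).
      { apply functional_extensionality. intros k. unfold U.
        destruct (Nat.ltb_spec k N); auto. destruct (Nat.eqb_spec k N). subst; lia.
        apply Tj; lia. }
      rewrite Hxj, Ej at 1. reflexivity. }
  clear Hx Hxj Htail HdN Hv.
  destruct Hrep as [v [c [Hvv [Hc Hxv]]]].
  set (u := U v N c). set (u' := U' m v N c).
  assert (Hvu : valid m u) by (apply U_valid; auto; lia).
  assert (Hvu' : valid m u') by (apply U'_valid; auto; lia).
  assert (Hxu' : x = Vw q u').
  { rewrite Hxv. unfold u, u'. rewrite VU, VU'; auto. apply (q_col m); auto.
    apply (Pw_q_lim m); auto. lia. }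
  assert (Fx : F m q p x = Vw p u) by (rewrite Hxv; apply F_eq; auto).
  assert (Fx' : F m q p x = Vw p u') by (rewrite Hxu'; apply F_eq; auto).
  set (f := fun h => (F m q p (x + h) - F m q p x) / h) in Hl.
  set (r := fun k => Pw p u k / Pw q u k).
  assert (Hr : forall k, (S N <= k)%nat -> f (Pw q u k) = r k).
  { intros k Hk. unfold f, r.
    assert (Ey : x + Pw q u k = Vw q (Tm m u k)).
    { rewrite V_Tm. rewrite Hxv. fold u. rewrite (tail_0 q u k). ring.
      intros i Hi; apply U_tail; lia. apply (q_col m); auto. apply (Pw_q_lim m); auto. apply Tm_valid; auto. }
    rewrite Ey, F_eq, V_Tm, Fx; auto. rewrite (tail_0 p u k).
    field. apply Rgt_not_eq, (Pw_pos m q Hqpos u k Hvu).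
    intros i Hi; apply U_tail; lia. apply (p_col m); auto. apply (Pw_p_lim m); auto. apply Tm_valid; auto.
    apply Tm_valid; auto. }
  set (r' := fun k => Pw p u' k / Pw q u' k).
  assert (Hr' : forall k, (S N <= k)%nat -> f (- Pw q u' k) = r' k).
  { intros k Hk. unfold f, r'.
    assert (Hvx : forall w, (forall k, betaP w (S (m k)) k = 1) -> is_lim_seq (Pw w u') 0 ->
              Vw w u' = Sw w u' k + Pw w u' k).
    { intros w Hcw Hlw. apply (tail_m w m u' k Hcw); auto. intros i Hi. apply U'_tail; lia. }
    assert (Ez : x + - Pw q u' k = Vw q (T0 u' k)).
    { rewrite V_T0, Hxu', Hvx. ring. apply (q_col m); auto. apply (Pw_q_lim m); auto. }
    rewrite Ez, F_eq, V_T0, Fx', Hvx; auto.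
    field. apply Rgt_not_eq, (Pw_pos m q Hqpos u' k Hvu').
    apply (p_col m); auto. apply (Pw_p_lim m); auto. apply T0_valid; auto. }
  set (t0 := fun n => pprod (fun k => p O k / q O k) n) in HL0l.
  set (tm := fun n => pprod (fun k => p (m k) k / q (m k) k) n) in HLml.
  assert (Ht0 : forall n, 0 < t0 n).
  { intros n; apply pprod_pos. intros k. apply Rdiv_lt_0_compat; auto. apply Hqpos; lia. }
  assert (Htm : forall n, 0 < tm n).
  { intros n; apply pprod_pos. intros k. apply Rdiv_lt_0_compat; auto. }
  assert (LR : is_lim_seq (fun n => r (n + S N)%nat) (r (S N) / t0 (S N) * L0)).
  { apply (ratio_lim r t0 (fun k => p O k / q O k)); auto.
    - intros k Hk. unfold r.
      assert (Ea : Pw p u (S k) = Pw p u k * p (u k) k) by reflexivity.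
      assert (Eb : Pw q u (S k) = Pw q u k * q (u k) k) by reflexivity.
      rewrite Ea, Eb. replace (u k) with O by (unfold u; rewrite (U_tail v N c k) by lia; reflexivity).
      field. split.
      apply Rgt_not_eq, Hqpos; lia. apply Rgt_not_eq, (Pw_pos m q Hqpos u k Hvu).
    - apply Rgt_not_eq, Ht0. }
  assert (LL : is_lim_seq (fun n => r' (n + S N)%nat) (r' (S N) / tm (S N) * Lm)).
  { apply (ratio_lim r' tm (fun k => p (m k) k / q (m k) k)); auto.
    - intros k Hk. unfold r'.
      assert (Ea : Pw p u' (S k) = Pw p u' k * p (u' k) k) by reflexivity.
      assert (Eb : Pw q u' (S k) = Pw q u' k * q (u' k) k) by reflexivity.
      rewrite Ea, Eb. replace (u' k) with (m k) by (unfold u'; rewrite (U'_tail m v N c k) by lia; reflexivity).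
      field. split.
      apply Rgt_not_eq, Hqpos; lia. apply Rgt_not_eq, (Pw_pos m q Hqpos u' k Hvu').
    - apply Rgt_not_eq, Htm. }
  assert (C1 : is_lim_seq (fun n => f (Pw q u (n + S N)%nat)) l).
  { apply (is_lim_comp_seq f _ 0 l Hl).
    - exists O. intros n _ E. injection E. apply Rgt_not_eq, (Pw_pos m q Hqpos u _ Hvu).
    - apply (is_lim_seq_incr_n (Pw q u) (S N)). apply (Pw_q_lim m); auto. }
  assert (C2 : is_lim_seq (fun n => f (- Pw q u' (n + S N)%nat)) l).
  { apply (is_lim_comp_seq f _ 0 l Hl).
    - exists O. intros n _ E. injection E. pose proof (Pw_pos m q Hqpos u' (n + S N) Hvu'). lra.
    - replace (Finite 0) with (Rbar_opp 0) by (simpl; f_equal; ring).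
      apply -> is_lim_seq_opp. apply (is_lim_seq_incr_n (Pw q u') (S N)). apply (Pw_q_lim m); auto. }
  apply is_lim_seq_unique in C1. apply is_lim_seq_unique in C2.
  erewrite Lim_seq_ext in C1 by (intros n; apply Hr; lia).
  erewrite Lim_seq_ext in C2 by (intros n; apply Hr'; lia).
  rewrite (is_lim_seq_unique _ _ LR) in C1. rewrite (is_lim_seq_unique _ _ LL) in C2.
  rewrite <- C2 in C1. injection C1 as E.
  destruct (U_SN p v N c) as [_ Bp]. destruct (U_SN q v N c) as [_ Bq].
  destruct (U'_SN p m v N c) as [_ Bp']. destruct (U'_SN q m v N c) as [_ Bq'].
  unfold r, r' in E. change (U v N c) with u in Bp, Bq. change (U' m v N c) with u' in Bp', Bq'. rewrite Bp, Bq, Bp', Bq' in E.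
  pose proof (lim_pos t0 L0 Ht0 HL0 HL0l) as PL0.
  pose proof (lim_pos tm Lm Htm HLm HLml) as PLm.
  assert (HA : Pw p v N <> 0).
  { apply pprod_nz. intros l0 _. apply Hpnz, Hvv. }
  pose proof (Pw_pos m q Hqpos v N Hvv) as HQv.
  pose proof (Ht0 (S N)) as T0p. pose proof (Htm (S N)) as Tmp.
  assert (Hqc : 0 < q c N) by (apply Hqpos; lia).
  assert (Hqc1 : 0 < q (c-1)%nat N) by (apply Hqpos; lia).
  specialize (Hsign N c Hc).
  set (A := Pw p v N) in *. set (Q := Pw q v N) in *.
  set (pc := p c N) in *. set (pc1 := p (c-1)%nat N) in *.
  set (T0 := t0 (S N)) in *. set (TM := tm (S N)) in *.
  assert (E2 : A * (pc * L0 * q (c-1)%nat N * TM - pc1 * Lm * q c N * T0) = 0).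
  { replace (A * (pc * L0 * q (c-1)%nat N * TM - pc1 * Lm * q c N * T0)) with
      ((A * pc / (Q * q c N) / T0 * L0 - A * pc1 / (Q * q (c-1)%nat N) / TM * Lm) *
        (Q * q c N * T0 * q (c-1)%nat N * TM)).
    rewrite E. ring. field. repeat split; lra. }
  apply Rmult_integral in E2. destruct E2 as [E2|E2]; [contradiction|].
  assert (0 < L0 * q (c-1)%nat N * TM) by (apply Rmult_lt_0_compat; [apply Rmult_lt_0_compat|]; assumption).
  assert (0 < Lm * q c N * T0) by (apply Rmult_lt_0_compat; [apply Rmult_lt_0_compat|]; assumption).
  assert (pc * pc1 * (Lm * q c N * T0) < 0) by nra.
  assert (0 <= pc * pc * (L0 * q (c-1)%nat N * TM)) by nra.
  apply (f_equal (Rmult pc)) in E2. rewrite Rmult_0_r in E2.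
  assert (pc * pc * (L0 * q (c-1)%nat N * TM) - pc * pc1 * (Lm * q c N * T0) = 0)
    by (rewrite <- E2; ring).
  lra.
Qed.
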